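(* Let $m_1\le m_2\le\dots\le m_k$ be nonnegative integers, $n=\sum_r m_r$, and let $T_1,\dots,T_n\in\{H,L\}$ with $0\le H<L$. Let $q^{(t)}_r$ ($1\le r\le k$, $1\le t\le n+1$) be the capacity variables computed by Algorithm 1 on this input. Then for every $1\le t\le n$ and every $1\le r<s\le k$ we have $q^{(t)}_r\le q^{(t)}_s$.
   Context: Algorithm 1 (simulation-based threshold algorithm). Input: integers $0\le m_1\le\dots\le m_k$ and a sequence $T_1,\dots,T_n$ with $n=\sum_r m_r$. Set $q^{(1)}_r=m_r$ for all $r$. For $t=1,\dots,n$: set $x_t=\mathrm{TA}(q^{(t)}_1,\dots,q^{(t)}_k;\,T_t,T_{t+1},\dots,T_n)$ and $q^{(t+1)}_r=q^{(t)}_r-\mathbf{1}(x_t=r)$ for each $r$. Output $\mathbf{x}=(x_1,\dots,x_n)$. Subroutine $\mathrm{TA}(m_1,\dots,m_k;\,S_1,\dots,S_N)$ (ThresholdAllocation), with the convention $m_0:=0$: for $\gamma=k,k-1,\dots,1$: if $m_\gamma=m_{\gamma-1}$, go to the next $\gamma$; otherwise, for $h=\gamma,\gamma+1,\dots,k$: let $Z_L=\sum_{i=1}^{h-1}\min\{m_i,m_{\gamma-1}\}$ and $Z_H=\sum_{i=\gamma}^{h}(m_i-m_{\gamma-1})$; if $|\{i\in\{1,\dots,Z_L+Z_H\}: S_i>S_1\}|\ge Z_L$, return $\gamma$ (agent to which $S_1$ is assigned). *)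

(* Defs.v *)
From HB Require Import structures.
From mathcomp Require Import all_boot all_order all_algebra.
Set Implicit Arguments. Unset Strict Implicit. Unset Printing Implicit Defensive.
Import Order.TTheory GRing.Theory Num.Theory.

(* Capacities are functions m : nat -> nat, used on indices 1..k;
   convention m_0 := 0 is implemented by [m0]. *)
Definition m0 (m : nat -> nat) (i : nat) : nat := if i == 0 then 0 else m i.

Section TA.
Variable R : realDomainType.

Definition TA_test (m : nat -> nat) (S : seq R) (g h : nat) : bool :=
  let mg := m0 m g.-1 in
  let ZL := (\sum_(1 <= i < h) minn (m i) mg)%N in
  let ZH := (\sum_(g <= i < h.+1) (m i - mg))%N in
  (ZL <= count (fun x : R => (head 0%R S < x)%R) (take (ZL + ZH) S))%N.

(* ThresholdAllocation(m_1..m_k; S_1..S_N): scan gamma = k, k-1, ..., 1;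
   skip gamma if m_gamma = m_{gamma-1}; otherwise scan h = gamma..k and return
   gamma at the first h passing the test.  Returns 0 if no gamma is returned. *)
Definition TA (k : nat) (m : nat -> nat) (S : seq R) : nat :=
  head 0%N [seq g <- rev (iota 1 k) |
             (m0 m g != m0 m g.-1) && has (TA_test m S g) (iota g (k.+1 - g))].

(* qstate k m T t = q^{(t+1)} of Algorithm 1, i.e. after t steps. *)
Fixpoint qstate (k : nat) (m : nat -> nat) (T : seq R) (t : nat) : nat -> nat :=
  match t with
  | 0 => m
  | t'.+1 =>
      let q := qstate k m T t' in
      let x := TA k q (drop t' T) in
      fun r => (q r - (x == r))%N
  end.

Definition q_alg (k : nat) (m : nat -> nat) (T : seq R) (t r : nat) : nat :=
  qstate k m T t.-1 r.
End TA.

(* Main.v *)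
Require Import Defs.
From HB Require Import structures.
From mathcomp Require Import all_boot all_order all_algebra.
From mathcomp Require Import zify.
Import Order.TTheory GRing.Theory Num.Theory.

Lemma TA_spec (R : realDomainType) k (q : nat -> nat) (S : seq R) :
  TA k q S = 0%N \/
  [/\ (1 <= TA k q S)%N, (TA k q S <= k)%N &
      m0 q (TA k q S) != m0 q (TA k q S).-1].
Proof.
rewrite /TA.
set P := (fun g => _ && _).
case E: [seq g <- rev (iota 1 k) | P g] => [|x l] /=; first by left.
right.
have : x \in [seq g <- rev (iota 1 k) | P g] by rewrite E mem_head.
rewrite mem_filter mem_rev mem_iota => /andP [/andP [Hne _] /andP [H1 H2]].
split => //; lia.
Qed.

Lemma step_sorted (R : realDomainType) k (q : nat -> nat) (S : seq R) :
  (forall r, (1 <= r)%N -> (r < k)%N -> (q r <= q r.+1)%N) ->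
  forall r, (1 <= r)%N -> (r < k)%N ->
   (q r - (TA k q S == r) <= q r.+1 - (TA k q S == r.+1))%N.
Proof.
move=> Hq r H1 H2.
have Hr := Hq r H1 H2.
case: (@TA_spec R k q S) => [-> | [Ha Hb Hc]].
  case: r H1 H2 Hr => //= r _ _ Hr; lia.
case: (eqVneq (TA k q S) r.+1) => [Ex|Nx].
  move: Hc; rewrite Ex /m0 /=.
  case: (eqVneq r 0%N) => [Er|Nr] /=.
    rewrite Er; case: (q 1%N) => // n _; rewrite eqn0Ngt; lia.
  move=> Hne; have {}Hne : q r != q r.+1 by move: Hne; case: r Nr {Hr H1 H2 Ex} => // r _; rewrite eq_sym.
  have : (q r < q r.+1)%N by rewrite ltn_neqAle Hne Hr.
  case: (TA k q S == r); lia.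
case: (TA k q S == r) => /=; lia.
Qed.

Lemma qstate_sorted (R : realDomainType) k (m : nat -> nat) (T : seq R) t :
  (forall r, (1 <= r)%N -> (r < k)%N -> (m r <= m r.+1)%N) ->
  forall r, (1 <= r)%N -> (r < k)%N ->
   (qstate k m T t r <= qstate k m T t r.+1)%N.
Proof.
move=> Hm; elim: t => [|t IH] //= r H1 H2.
exact: (@step_sorted R).
Qed.

Theorem lemma3 (R : realDomainType) (k : nat) (m : nat -> nat) (H L : R)
    (T : seq R) :
  (forall r, (1 <= r)%N -> (r < k)%N -> (m r <= m r.+1)%N) ->
  size T = (\sum_(1 <= r < k.+1) m r)%N ->
  (0 <= H)%R -> (H < L)%R ->
  all (fun x => (x == H) || (x == L)) T ->
  forall t r s, (1 <= t)%N -> (t <= size T)%N ->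
    (1 <= r)%N -> (r < s)%N -> (s <= k)%N ->
    (q_alg k m T t r <= q_alg k m T t s)%N.
Proof.
move=> Hm _ _ _ _ t r s _ _ H1 Hrs Hs.
rewrite /q_alg.
have Hq := @qstate_sorted R k m T t.-1 Hm.
elim: s Hrs Hs => [|s IH] // Hrs Hs.
case: (eqVneq r s) => [->|Nrs]; first by apply: Hq; lia.
apply: leq_trans (IH _ _) (Hq _ _ _); lia.
Qed.
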